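(* Let $\mathbf{P}=(\Omega,\preccurlyeq_{\mathbf{P}})$ be a poset on a finite set $\Omega$. The following are equivalent: (1) $\mathbf{P}$ is hierarchical; (2) for any $D,B\in\mathcal{I}(\overline{\mathbf{P}})$, $|D|=|B|$ implies $|\min_{\mathbf{P}}(D)|=|\min_{\mathbf{P}}(B)|$; (3) for any $A\subseteq\Omega$ such that $a\preccurlyeq_{\mathbf{P}}b$ for all $a\in A$, $b\in\Omega-A$, it holds that $c\preccurlyeq_{\mathbf{P}}d$ for all $c\in A-\max_{\mathbf{P}}(A)$, $d\in\max_{\mathbf{P}}(A)$; (4) for any $I,J\in\mathcal{I}(\mathbf{P})$, $|I|=|J|$ implies $|\max_{\mathbf{P}}(I)|=|\max_{\mathbf{P}}(J)|$; (5) for any $B\subseteq\Omega$ such that $a\preccurlyeq_{\mathbf{P}}b$ for all $a\in\Omega-B$, $b\in B$, it holds that $c\preccurlyeq_{\mathbf{P}}d$ for all $c\in\min_{\mathbf{P}}(B)$, $d\in B-\min_{\mathbf{P}}(B)$.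
   Context: $\mathcal{I}(\mathbf{P})$ is the set of ideals (down-closed subsets) of $\mathbf{P}$; $\overline{\mathbf{P}}$ is the dual poset ($u\preccurlyeq_{\overline{\mathbf{P}}}v\iff v\preccurlyeq_{\mathbf{P}}u$), so $\mathcal{I}(\overline{\mathbf{P}})$ is the set of up-closed subsets of $\mathbf{P}$. $\max_{\mathbf{P}}(B)$, $\min_{\mathbf{P}}(B)$ are the sets of maximal, minimal elements of $B$. $\mathrm{len}(y)$ is the largest cardinality of a chain in $\mathbf{P}$ with greatest element $y$; $\mathbf{P}$ is hierarchical if for all $u,v$ with $\mathrm{len}(u)+1\leqslant\mathrm{len}(v)$ we have $u\preccurlyeq_{\mathbf{P}}v$. *)

(* Defs.v *)
(* a finite poset is a finPOrderType; Omega = the whole type. *)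
From mathcomp Require Import all_boot all_order.
Set Implicit Arguments. Unset Strict Implicit. Unset Printing Implicit Defensive.
Import Order.TTheory.
Local Open Scope order_scope.

Section PosetDefs.
Context {disp : Order.disp_t} {T : finPOrderType disp}.

Definition is_ideal (A : {set T}) : bool :=
  [forall x, forall y, ((y \in A) && (x <= y)) ==> (x \in A)].

(* I(dual P): up-closed subsets *)
Definition is_upset (A : {set T}) : bool :=
  [forall x, forall y, ((x \in A) && (x <= y)) ==> (y \in A)].

Definition pmax (B : {set T}) : {set T} :=
  [set x in B | [forall y in B, (x <= y) ==> (y == x)]].
Definition pmin (B : {set T}) : {set T} :=
  [set x in B | [forall y in B, (y <= x) ==> (y == x)]].

Definition is_chain (C : {set T}) : bool :=
  [forall x in C, forall y in C, (x <= y) || (y <= x)].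

Definition len (y : T) : nat :=
  \max_(C : {set T} | is_chain C && (y \in C) && [forall x in C, x <= y]) #|C|.

Definition hierarchical : Prop :=
  forall u v : T, (len u + 1 <= len v)%N -> u <= v.

End PosetDefs.

(* Main.v *)
Require Import Defs.
From mathcomp Require Import all_boot all_order.
Set Implicit Arguments. Unset Strict Implicit. Unset Printing Implicit Defensive.
Import Order.TTheory.
Local Open Scope order_scope.

Section Gen.
Context {disp : Order.disp_t} {T : finPOrderType disp}.
Implicit Types (A B I J : {set T}) (a b c x y z : T).

Definition W := forall a b c : T, a < b -> (a < c) || (c < b).

Lemma ex_max A x0 : x0 \in A -> exists2 x, x \in A & forall y, y \in A -> x <= y -> y = x.
Proof.
move=> Ax0.
case: (arg_maxnP (fun i => #|[set z | z <= i]|) Ax0) => x Ax Hmax.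
exists x => // y Ay lexy; apply/eqP; apply: contraT => neq.
have : (#|[set z | (z <= x)%O]| < #|[set z | (z <= y)%O]|)%N.
  apply: proper_card; apply/properP; split.
    by apply/subsetP => z; rewrite !inE => ?; exact: le_trans lexy.
  exists y; rewrite !inE ?lexx //; apply/negP => yx.
  by move: neq; rewrite (le_anti (andb_true_intro (conj yx lexy))) eqxx.
by move=> h; have := leq_ltn_trans (Hmax y Ay) h; rewrite ltnn.
Qed.

Lemma ex_min A x0 : x0 \in A -> exists2 x, x \in A & forall y, y \in A -> y <= x -> y = x.
Proof.
move=> Ax0.
case: (arg_maxnP (fun i => #|[set z | i <= z]|) Ax0) => x Ax Hmax.
exists x => // y Ay lexy; apply/eqP; apply: contraT => neq.
have : (#|[set z | (x <= z)%O]| < #|[set z | (y <= z)%O]|)%N.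
  apply: proper_card; apply/properP; split.
    by apply/subsetP => z; rewrite !inE => ?; exact: le_trans lexy _.
  exists y; rewrite !inE ?lexx //; apply/negP => yx.
  by move: neq; rewrite (le_anti (andb_true_intro (conj lexy yx))) eqxx.
by move=> h; have := leq_ltn_trans (Hmax y Ay) h; rewrite ltnn.
Qed.

Lemma pmaxP B x : reflect (x \in B /\ forall y, y \in B -> x <= y -> y = x) (x \in pmax B).
Proof.
rewrite inE; apply: (iffP andP) => [[xB /forallP H]|[xB H]]; split=> //.
  by move=> y yB xy; apply/eqP; move: (H y); rewrite yB xy.
by apply/forallP => y; apply/implyP => yB; apply/implyP => xy; rewrite (H y yB xy).
Qed.

Lemma notmax B x : x \in B :\: pmax B -> exists2 y, y \in B & x < y.
Proof.
rewrite !inE => /andP[nm xB]; move: nm; rewrite xB /= => /forallPn [y].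
rewrite negb_imply => /andP[yB]; rewrite negb_imply => /andP[xy ney].
by exists y => //; rewrite lt_neqAle eq_sym ney.
Qed.

Lemma lt_notmax B x y : y \in B -> x < y -> x \notin pmax B.
Proof.
move=> yB xy; apply/negP => /pmaxP [_ H].
by have e := H y yB (ltW xy); move: xy; rewrite e ltxx.
Qed.

Lemma is_idealP I : reflect (forall x y, y \in I -> x <= y -> x \in I) (is_ideal I).
Proof.
apply: (iffP forallP) => [H x y yI xy|H x].
  by move: (forallP (H x) y); rewrite yI xy.
by apply/forallP => y; apply/implyP => /andP[]; apply: H.
Qed.

Lemma P3_of_W : W -> forall A : {set T},
  (forall a b, a \in A -> b \notin A -> a <= b) ->
  forall c d, c \in A :\: pmax A -> d \in pmax A -> c <= d.
Proof.
move=> HW A _ c d /notmax [z zA cz] dM.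
case/orP: (HW c z d cz) => [/ltW //|dz].
by move: (lt_notmax zA dz); rewrite dM.
Qed.

Lemma W_of_P3 : (forall A : {set T},
  (forall a b, a \in A -> b \notin A -> a <= b) ->
  forall c d, c \in A :\: pmax A -> d \in pmax A -> c <= d) -> W.
Proof.
move=> P3 a b c ab.
suff H : forall n (A : {set T}), (#|A| <= n)%N ->
    (forall a b, a \in A -> b \notin A -> a <= b) ->
    a \in A -> b \in A -> c \in A -> (a < c) || (c < b).
  apply: (H #|T| setT); first by rewrite cardsT.
  1-4: by [move=> ? ?; rewrite !in_setT | rewrite in_setT].
elim=> [|n IH] A.
  by rewrite leqn0 => /eqP/cards0_eq -> _; rewrite inE.
move=> cardA HA aA bA cA.
have aN : a \in A :\: pmax A.
  by rewrite inE aA andbT; apply: (lt_notmax bA ab).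
case cM: (c \in pmax A).
  have := P3 A HA a c aN cM; rewrite le_eqVlt => /orP[/eqP ac|->//].
  by rewrite -ac ab orbT.
case bM: (b \in pmax A).
  have cN : c \in A :\: pmax A by rewrite inE cM cA.
  have := P3 A HA c b cN bM; rewrite le_eqVlt => /orP[/eqP cb|->].
    by rewrite cb ab.
  by rewrite orbT.
apply: (IH (A :\: pmax A)).
- have [m mA mM] := ex_max aA.
  have : (#|A :\: pmax A| < #|A|)%N.
    apply: proper_card; apply/properP; split; first exact: subsetDl.
    by exists m => //; rewrite inE mA andbT negbK; apply/pmaxP.
  by move=> h; rewrite -ltnS; apply: leq_trans h cardA.
- move=> x y; rewrite !in_setD => /andP[xnM xA].
  rewrite negb_and negbK => /orP[yM|yA]; last exact: HA.
  by apply: (P3 A HA); rewrite // in_setD xnM.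
- exact: aN.
- by rewrite inE bM bA.
- by rewrite inE cM cA.
Qed.

Lemma sub_lower I J q : W -> is_ideal I -> is_ideal J -> q \in J -> q \notin I ->
  I :\: pmax I \subset J :\: pmax J.
Proof.
move=> HW /is_idealP HI /is_idealP HJ qJ qI; apply/subsetP => x /notmax [m mI xm].
case/orP: (HW x m q xm) => [xq|qm]; last by move: qI; rewrite (HI q m mI (ltW qm)).
by rewrite inE (HJ x q qJ (ltW xq)) andbT (lt_notmax qJ xq).
Qed.

Lemma card_pmax I : #|pmax I| = (#|I| - #|I :\: pmax I|)%N.
Proof.
have sub : pmax I \subset I by apply/subsetP => x /pmaxP [].
by rewrite -(cardsID (pmax I) I) (setIidPr sub) addnK.
Qed.

Lemma P4_of_W : W -> forall I J : {set T}, is_ideal I -> is_ideal J ->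
  #|I| = #|J| -> #|pmax I| = #|pmax J|.
Proof.
move=> HW I J HI HJ cIJ.
case: (boolP (J \subset I)) => JI.
  by have /eqP -> : J == I by rewrite eqEcard JI cIJ leqnn.
case: (boolP (I \subset J)) => IJ.
  by have /eqP -> : I == J by rewrite eqEcard IJ cIJ leqnn.
have [q qJ qI] := subsetPn JI.
have [p pI pJ] := subsetPn IJ.
have /eqP E : I :\: pmax I == J :\: pmax J.
  by rewrite eqEsubset (sub_lower HW HI HJ qJ qI) (sub_lower HW HJ HI pI pJ).
by rewrite !card_pmax E cIJ.
Qed.

Lemma W_of_P4 : (forall I J : {set T}, is_ideal I -> is_ideal J ->
  #|I| = #|J| -> #|pmax I| = #|pmax J|) -> W.
Proof.
move=> P4 a b c ab; apply/negPn/negP; rewrite negb_or => /andP[nac ncb].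
pose Z := [set x | x < b].
have cS : c \in [set z | (z <= c) && (z \notin Z)] by rewrite !inE lexx ncb.
have [y yS ymin] := ex_min cS.
have aM : a \in [set z | (z \in Z) && (a <= z)] by rewrite !inE ab lexx.
have [m mM mmax] := ex_max aM.
move: yS mM; rewrite !inE => /andP[yc yZ] /andP[mb am].
have I1 : is_ideal (b |: Z).
  apply/is_idealP => x z; rewrite !inE => /orP[/eqP ->|zb] xz.
    by rewrite -le_eqVlt.
  by rewrite (le_lt_trans xz zb) orbT.
have I2 : is_ideal (y |: Z).
  apply/is_idealP => x z; rewrite !inE => /orP[/eqP ->|zb] xz; last first.
    by rewrite (le_lt_trans xz zb) orbT.
  case: (boolP (x < b)) => xb; first by rewrite orbT.
  have : x \in [set z | (z <= c) && (z \notin Z)].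
    by rewrite !inE xb (le_trans xz yc).
  by move=> /ymin -> //; rewrite eqxx.
have C : #|b |: Z| = #|y |: Z| by rewrite !cardsU1 !inE ltxx (negbTE yZ).
have := P4 _ _ I1 I2 C.
have h1 : (#|pmax (b |: Z)| <= 1)%N.
  rewrite -(cards1 b); apply: subset_leq_card; apply/subsetP => x /pmaxP [].
  rewrite !inE => /orP[//|xb] H.
  by move: (H b); rewrite !inE eqxx => /(_ isT (ltW xb)) e; move: xb; rewrite e ltxx.
have h2 : (2 <= #|pmax (y |: Z)|)%N.
  have ym : y != m by apply/negP => /eqP e; move: yZ; rewrite e mb.
  have := cards2 y m; rewrite ym => <-; apply: subset_leq_card.
  apply/subsetP => x /set2P [] ->; apply/pmaxP; split.
  - by rewrite !inE eqxx.
  - move=> z; rewrite !inE => /orP[/eqP -> //|zb] yz.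
    by move: yZ; rewrite (le_lt_trans yz zb).
  - by rewrite !inE mb orbT.
  - move=> z; rewrite !inE => /orP[/eqP ->|zb] mz.
      move: mz; rewrite le_eqVlt => /orP[/eqP e|my]; first by move: ym; rewrite e eqxx.
      by move: nac; rewrite (le_lt_trans am (lt_le_trans my yc)).
    by apply: mmax; rewrite // !inE zb (le_trans am mz).
by move=> e; move: h1 h2; rewrite e => h1 h2; move: (leq_trans h2 h1).
Qed.

End Gen.

Section Len.
Context {disp : Order.disp_t} {T : finPOrderType disp}.
Implicit Types (A B C : {set T}) (a b c x y z : T).

Definition chP y C := [&& is_chain C, y \in C & [forall x in C, x <= y]].

Lemma chP_intro y C : (forall u v, u \in C -> v \in C -> (u <= v) || (v <= u)) ->
  y \in C -> (forall x, x \in C -> x <= y) -> chP y C.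
Proof.
move=> H yC Hy; rewrite /chP yC /=; apply/andP; split.
  by apply/forallP => u; apply/implyP => uC; apply/forallP => v; apply/implyP => vC; apply: H.
by apply/forallP => x; apply/implyP; apply: Hy.
Qed.

Lemma chP_elim y C : chP y C -> [/\ (forall u v, u \in C -> v \in C -> (u <= v) || (v <= u)),
  y \in C & (forall x, x \in C -> x <= y)].
Proof.
case/and3P => /forallP Hc yC /forallP Hy; split=> //.
  by move=> u v uC vC; move: (Hc u); rewrite uC => /forallP /(_ v); rewrite vC.
by move=> x xC; move: (Hy x); rewrite xC.
Qed.

Lemma len_lb y C : chP y C -> (#|C| <= len y)%N.
Proof.
move=> H; rewrite /len.
by apply: (@leq_bigmax_cond _ (fun C => is_chain C && (y \in C) && [forall x in C, x <= y]) (fun C => #|C|) C); move: H; rewrite /chP andbA.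
Qed.

Lemma len_ex y : exists2 C, chP y C & #|C| = len y.
Proof.
have y1 : chP y [set y].
  apply: chP_intro; last by move=> x /set1P ->.
    by move=> u v /set1P -> /set1P ->; rewrite lexx.
  by rewrite inE.
have := @eq_bigmax_cond _ [pred C : {set T} | is_chain C && (y \in C) && [forall x in C, x <= y]] (fun C => #|C|).
case.
  by apply/card_gt0P; exists [set y]; rewrite inE; move: y1; rewrite /chP andbA.
by move=> C HC E; exists C; [move: HC; rewrite inE /chP andbA | rewrite /len E].
Qed.

Lemma len_ge1 y : (1 <= len y)%N.
Proof.
have y1 : chP y [set y].
  apply: chP_intro; last by move=> x /set1P ->.
    by move=> u v /set1P -> /set1P ->; rewrite lexx.
  by rewrite inE.
by have := len_lb y1; rewrite cards1.
Qed.

Lemma len_mono x y : x < y -> (len x < len y)%N.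
Proof.
move=> xy; have [C HC E] := len_ex x; case/chP_elim: HC => Hc xC Hx.
have yC : y \notin C.
  by apply/negP => /Hx yx; move: (lt_le_trans xy yx); rewrite ltxx.
rewrite -E; have -> : #|C|.+1 = #|y |: C| by rewrite cardsU1 yC.
apply: len_lb; apply: chP_intro.
- move=> u v; rewrite !inE => /orP[/eqP ->|uC] /orP[/eqP ->|vC]; rewrite ?lexx //.
  + by rewrite (le_trans (Hx v vC) (ltW xy)) orbT.
  + by rewrite (le_trans (Hx u uC) (ltW xy)).
  + exact: Hc.
- by rewrite !inE eqxx.
- move=> z; rewrite !inE => /orP[/eqP ->|zC]; first exact: lexx.
  exact: (le_trans (Hx z zC) (ltW xy)).
Qed.

Lemma len_pred v : (1 < len v)%N -> exists2 w : T, w < v & (len v <= (len w).+1)%N.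
Proof.
move=> lv; have [C HC E] := len_ex v; case/chP_elim: HC => Hc vC Hv.
have cD : #|C :\ v| = (len v).-1 by rewrite -E (cardsD1 v C) vC.
have [w0 w0C] : exists w0, w0 \in C :\ v.
  by apply/card_gt0P; rewrite cD; case: (len v) lv => [|[]].
have [w wC wmax] := ex_max w0C.
move: (wC); rewrite !inE => /andP[wv wC'].
exists w; first by rewrite lt_neqAle wv (Hv w wC').
have : (#|C :\ v| <= len w)%N.
  apply: len_lb; apply: chP_intro => //.
  - by move=> u u'; rewrite !inE => /andP[_ uC] /andP[_ u'C]; apply: Hc.
  - move=> z zC; have zC' : z \in C by move: zC; rewrite !inE => /andP[].
    case/orP: (Hc w z wC' zC') => // wz.
    by rewrite (wmax z zC wz) lexx.
by rewrite cD; case: (len v) => // n; rewrite ltnS.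
Qed.

Lemma P1_W : hierarchical (T:=T) <-> W (T:=T).
Proof.
split.
- move=> H a b c ab; apply/negPn/negP; rewrite negb_or => /andP[nac ncb].
  have lab := len_mono ab.
  case: (ltnP (len c) (len b)) => cb.
    have := H c b; rewrite addn1 => /(_ cb); rewrite le_eqVlt (negbTE ncb) orbF.
    by move=> /eqP e; move: nac; rewrite e ab.
  have := H a c; rewrite addn1 => /(_ (leq_trans lab cb)); rewrite le_eqVlt (negbTE nac) orbF.
  by move=> /eqP e; move: ncb; rewrite -e ab.
- move=> HW u v; rewrite addn1 => uv.
  have [w wv lw] := len_pred (leq_ltn_trans (len_ge1 u) uv).
  case/orP: (HW w v u wv) => [wu|/ltW //].
  by have := len_mono wu; rewrite ltnNge -ltnS (leq_trans uv lw).
Qed.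

End Len.

Section Dual.
Context {disp : Order.disp_t} {T : finPOrderType disp}.

Lemma W_dual : W (T:=T) -> W (T:=T^d).
Proof. by move=> H a b c ab; have := H b a c ab; rewrite orbC. Qed.

Lemma W_undual : W (T:=T^d) -> W (T:=T).
Proof. by move=> H a b c ab; have := H b a c ab; rewrite orbC. Qed.

Lemma upset_dual (D : {set T}) : is_upset D = @is_ideal _ T^d D.
Proof.
apply/idP/idP.
  move/forallP => H; apply/is_idealP => x y yD xy.
  by move: (forallP (H y) x); rewrite yD /= => /implyP; apply; exact: xy.
move/is_idealP => H; apply/forallP => x; apply/forallP => y; apply/implyP => /andP[xD xy].
exact: (H y x xD xy).
Qed.

End Dual.

Unset Implicit Arguments.
Theorem lemma2p6 (disp : Order.disp_t) (T : finPOrderType disp) :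
  let P1 := @hierarchical disp T in
  let P2 := forall D B : {set T}, is_upset D -> is_upset B ->
              #|D| = #|B| -> #|pmin D| = #|pmin B| in
  let P3 := forall A : {set T},
              (forall a b, a \in A -> b \notin A -> a <= b) ->
              forall c d, c \in A :\: pmax A -> d \in pmax A -> c <= d in
  let P4 := forall I J : {set T}, is_ideal I -> is_ideal J ->
              #|I| = #|J| -> #|pmax I| = #|pmax J| in
  let P5 := forall B : {set T},
              (forall a b, a \notin B -> b \in B -> a <= b) ->
              forall c d, c \in pmin B -> d \in B :\: pmin B -> c <= d in
  [/\ P1 <-> P2, P1 <-> P3, P1 <-> P4 & P1 <-> P5].
Proof.
move=> P1 P2 P3 P4 P5.
have [E1a E1b] : (P1 -> W (T:=T)) /\ (W (T:=T) -> P1) by exact: P1_W.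
split.
- split.
    move=> /E1a /W_dual /P4_of_W H D B HD HB cDB.
    by apply: H => //; rewrite -upset_dual.
  move=> H; apply: E1b; apply: W_undual; apply: W_of_P4 => I J HI HJ cIJ.
  by apply: H => //; rewrite upset_dual.
- split; [move=> /E1a; exact: P3_of_W | move=> h; apply: E1b; exact: W_of_P3].
- split; [move=> /E1a; exact: P4_of_W | move=> h; apply: E1b; exact: W_of_P4].
- split.
    move=> /E1a /W_dual /P3_of_W H B HB c d cM dN.
    exact: (H B (fun a b aB bB => HB b a bB aB) d c dN cM).
  move=> H; apply: E1b; apply: W_undual; apply: W_of_P3 => A HA c d cN dM.
  exact: (H A (fun a b aA bA => HA b a bA aA) d c dM cN).
Qed.
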